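(* Let $G=K_{m_1,\dots,m_k}$ be the complete multipartite graph with $k\ge 1$ parts of sizes $m_1,\dots,m_k\ge 1$, and let $\alpha=\max\{m_1,\dots,m_k\}$. Then $G$ is pseudo-Gorenstein$^{*}$ if and only if $k=2$ and $\alpha$ is odd.
   Context: The complete multipartite graph $K_{m_1,\dots,m_k}$ has vertex set $V_1\sqcup\dots\sqcup V_k$ with $|V_i|=m_i$, and $\{a,b\}$ is an edge iff $a\in V_i$, $b\in V_j$ with $i\ne j$. For a finite simple graph $G$ on vertex set $[N]$, let $S=K[x_1,\dots,x_N]$ ($K$ a field) and $I(G)$ the edge ideal generated by $x_ix_j$, $\{i,j\}\in E(G)$. Let $\alpha(G)$ be the independence number (equal to $\dim S/I(G)$). Write the Hilbert series of $S/I(G)$ uniquely as $(h_0+\dots+h_st^s)/(1-t)^{\alpha(G)}$ with $h_s\ne 0$, and $\mathfrak a(G)=s-\alpha(G)$. $G$ is pseudo-Gorenstein$^{*}$ if $h_s=1$ and $\mathfrak a(G)=0$. *)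

(* Defs.v *)
From HB Require Import structures.
From mathcomp Require Import all_boot all_order all_algebra.
Set Implicit Arguments. Unset Strict Implicit. Unset Printing Implicit Defensive.
Import Order.TTheory GRing.Theory Num.Theory.

(* A finite simple graph: vertex finType V, edge relation e (assumed
   symmetric and irreflexive where relevant). Variables x_v, v in V. *)

Definition independent (V : finType) (e : rel V) (A : {set V}) : bool :=
  [forall x in A, forall y in A, ~~ e x y].

Definition alpha (V : finType) (e : rel V) : nat :=
  \max_(A : {set V} | independent e A) #|A|.

(* Hilbert function of S/I(G): dim_K (S/I(G))_d.  Since I(G) is a monomial
   ideal, the residue classes of the monomials x^a not in I(G) form a K-basis
   of S/I(G); x^a lies in I(G) iff some edge {x,y} has a_x > 0 and a_y > 0.
   Exponent vectors of degree d have entries <= d, hence live in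
   {ffun V -> 'I_d.+1}. *)
Definition hilb (V : finType) (e : rel V) (d : nat) : nat :=
  #|[set a : {ffun V -> 'I_d.+1} |
       (\sum_(v : V) (a v : nat) == d) &&
       [forall x, forall y, e x y ==> ((a x == 0 :> nat) || (a y == 0 :> nat))]]|.

Local Open Scope ring_scope.

Definition hnum (V : finType) (e : rel V) (n : nat) : int :=
  \sum_(i < n.+1) ((1 - 'X) ^+ alpha e : {poly int})`_i * (hilb e (n - i))%:Z.

(* G is pseudo-Gorenstein^*: HS = (h_0 + ... + h_s t^s)/(1-t)^alpha with
   h_s <> 0, and h_s = 1 and a(G) = s - alpha = 0. *)
Definition pseudo_gorenstein_star (V : finType) (e : rel V) : Prop :=
  exists h : {poly int},
    (forall n : nat, hnum e n = h`_n) /\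
    h != 0 /\
    lead_coef h = 1 /\
    ((size h).-1)%:Z - (alpha e)%:Z = 0.

Definition multipartite_vertex (k : nat) (m : 'I_k -> nat) : finType :=
  {i : 'I_k & 'I_(m i)}.

Definition multipartite_edge (k : nat) (m : 'I_k -> nat) :
  rel (multipartite_vertex m) := fun x y => tag x != tag y.

(* Main.v *)
Require Import Defs.
From mathcomp Require Import all_boot all_order all_algebra ring zify.
Import Order.TTheory GRing.Theory Num.Theory.

Lemma card_ffun_sum M d :
  #|[set b : {ffun 'I_M.+1 -> 'I_d.+1} | \sum_j (b j : nat) == d]| = 'C(M + d, M).
Proof.
rewrite -card_ord_partitions -!sum1dep_card.
rewrite (reindex (fun t : M.+1.-tuple 'I_d.+1 => [ffun j => tnth t j])) /=.
  apply: eq_bigl => t; rewrite big_tuple; congr (_ == _).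
  by apply: eq_bigr => j _; rewrite ffunE.
exists (fun f : {ffun 'I_M.+1 -> 'I_d.+1} => [tuple f j | j < M.+1]) => [t _|f _].
  by apply: eq_from_tnth => j; rewrite tnth_mktuple ffunE.
by apply/ffunP => j; rewrite ffunE tnth_mktuple.
Qed.

Section MP.
Variables (k : nat) (m : 'I_k -> nat).
Local Notation V := (multipartite_vertex m).
Local Notation e := (@multipartite_edge k m).

Lemma card_part i : #|[set x : V | tag x == i]| = m i.
Proof.
rewrite -sum1dep_card.
have := (@sig_big_dep nat 0 addn _ (fun i => 'I_(m i)) (pred1 i) (fun _ _ => true)
   (fun _ _ => 1)).
rewrite /= => H.
transitivity (\sum_(p : V | (tag p == i) && true) 1); first by apply: eq_bigl => p; rewrite andbT.
rewrite -H big_pred1_eq sum1_card card_ord //.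
Qed.

Lemma alpha_mp : alpha e = \max_i m i.
Proof.
apply/eqP; rewrite eqn_leq; apply/andP; split.
- apply/bigmax_leqP => A indA.
  case: (set_0Vmem A) => [->|[x xA]]; first by rewrite cards0.
  apply: leq_trans (leq_bigmax (tag x)).
  rewrite -card_part; apply: subset_leq_card; apply/subsetP => y yA.
  rewrite inE; move/forallP: indA => /(_ y) /implyP /(_ yA) /forallP /(_ x) /implyP /(_ xA).
  by rewrite /multipartite_edge negbK.
- apply/bigmax_leqP => i _; rewrite -card_part; apply: leq_bigmax_cond.
  apply/forallP => x; apply/implyP; rewrite inE => /eqP xi.
  apply/forallP => y; apply/implyP; rewrite inE => /eqP yi.
  by rewrite /multipartite_edge xi yi eqxx.
Qed.

Lemma sum_all (F : V -> nat) :
  \sum_x F x = \sum_i \sum_(j : 'I_(m i)) F (Tagged (fun i => 'I_(m i)) j).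
Proof.
have := (@sig_big_dep nat 0 addn _ (fun i => 'I_(m i)) xpredT (fun _ _ => true)
   (fun i j => F (Tagged (fun i => 'I_(m i)) j))).
move=> ->; apply: eq_big => [p|[i j] _] //.
Qed.

Lemma sum_part (F : V -> nat) i : (forall x : V, tag x != i -> F x = 0) ->
  \sum_x F x = \sum_(j : 'I_(m i)) F (Tagged (fun i => 'I_(m i)) j).
Proof.
move=> H; rewrite sum_all (bigD1 i) //= [X in _ + X]big1 ?addn0 // => i' ne.
by apply: big1 => j _; apply: H.
Qed.

Lemma hilb0 : hilb e 0 = 1.
Proof.
have z : forall u : 'I_1, (u : nat) = 0 by case=> [[]].
rewrite /hilb (_ : [set _ | _] = setT); first by rewrite cardsT card_ffun card_ord exp1n.
apply/setP => a; rewrite !inE big1 ?eqxx /=; last by move=> v _; rewrite z.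
by apply/forallP => x; apply/forallP => y; rewrite !z eqxx implybT.
Qed.

Lemma card_ffun_sum' n d : 0 < n ->
  #|[set b : {ffun 'I_n -> 'I_d.+1} | \sum_j (b j : nat) == d]| = 'C(n.-1 + d, n.-1).
Proof. by case: n => // n _; apply: card_ffun_sum. Qed.

Definition Ai d i := [set a : {ffun V -> 'I_d.+1} |
   (\sum_v (a v : nat) == d) && [forall x, ((a x : nat) != 0) ==> (tag x == i)]].

Lemma card_Ai d i : #|Ai d i| =
  #|[set b : {ffun 'I_(m i) -> 'I_d.+1} | \sum_j (b j : nat) == d]|.
Proof.
pose g (b : {ffun 'I_(m i) -> 'I_d.+1}) (n : nat) : 'I_d.+1 :=
  odflt ord0 (omap b (insub n)).
have gE b (j : 'I_(m i)) : g b j = b j by rewrite /g valK.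
pose f b : {ffun V -> 'I_d.+1} := [ffun x : V => if tag x == i then g b (tagged x) else ord0].
have fT b j : f b (Tagged (fun i => 'I_(m i)) j) = b j by rewrite ffunE /= eqxx gE.
have fN b (x : V) : tag x != i -> f b x = ord0 by rewrite ffunE => /negbTE ->.
have finj : injective f.
  move=> b1 b2 H; apply/ffunP => j.
  by have := congr1 (fun a : {ffun V -> 'I_d.+1} => a (Tagged (fun i => 'I_(m i)) j)) H; rewrite !fT.
rewrite -(card_imset _ finj); apply: eq_card => a; apply/idP/imsetP.
- rewrite inE => /andP [sa /forallP sup].
  have aN (x : V) : tag x != i -> a x = ord0.
    move=> ne; apply: val_inj => /=; apply/eqP; apply: contraR ne => nz.
    by have := implyP (sup x) nz.
  exists [ffun j => a (Tagged (fun i => 'I_(m i)) j)].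
    rewrite inE; move: sa; rewrite (sum_part _ i) => [|x /aN -> //].
    by under eq_bigr do rewrite ffunE.
  apply/ffunP => -[i' j]; case: (eqVneq i' i) => [ei|ne].
    by subst i'; rewrite fT ffunE.
  by rewrite fN // aN.
- move=> [b]; rewrite inE => sb ->; rewrite inE; apply/andP; split.
    rewrite (sum_part _ i) => [|x /fN -> //].
    by under eq_bigr do rewrite fT.
  apply/forallP => x; apply/implyP; apply: contraR => /fN -> //.
Qed.

Lemma hilbS d : 0 < d -> hilb e d = \sum_i #|Ai d i|.
Proof.
move=> d0; rewrite /hilb -sum1dep_card.
under [RHS]eq_bigr do rewrite /Ai -sum1dep_card big_mkcond.
rewrite exchange_big big_mkcond /=; apply: eq_bigr => a _.
case: ifP => [/andP [/eqP sa /forallP Pa] | Pa].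
- have [x0 nz] : exists x0, (a x0 : nat) != 0.
    case: (pickP (fun x => (a x : nat) != 0)) => [x0 nz|H]; first by exists x0.
    have : 0 < \sum_v (a v : nat) by rewrite sa.
    rewrite big1 // => x _; apply/eqP.
    by have := H x; move/negbT/negPn.
  rewrite (eq_bigr (fun i => if i == tag x0 then 1 else 0)) => [|i _].
    by rewrite -big_mkcond big_pred1_eq.
  congr (if _ then _ else _); apply/idP/idP.
    by case/andP => _ /forallP /(_ x0) /implyP /(_ nz); rewrite eq_sym.
  move/eqP ->; rewrite sa eqxx /=; apply/forallP => x; apply/implyP => nzx.
  apply: contraR nzx => ne.
  move: (Pa x) => /forallP /(_ x0) /implyP; rewrite /multipartite_edge => /(_ ne).
  by rewrite (negbTE nz) orbF.
- rewrite big1 // => i _; case: ifP => // /andP [sa /forallP Q]; move: Pa.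
  rewrite sa /=; move/negbT/negP; case; apply/forallP => x; apply/forallP => y.
  apply/implyP; rewrite /multipartite_edge => ne.
  case: (eqVneq (a x : nat) 0) => //= nzx; apply/eqP; apply: contraNeq ne => nzy.
  by move: (implyP (Q x) nzx) (implyP (Q y) nzy) => /eqP -> /eqP ->.
Qed.

Lemma hilb_formula d : (forall i, 0 < m i) -> 0 < d ->
  hilb e d = \sum_i 'C((m i).-1 + d, (m i).-1).
Proof.
move=> mpos d0; rewrite hilbS //; apply: eq_bigr => i _.
by rewrite card_Ai card_ffun_sum'.
Qed.

End MP.

Local Open Scope ring_scope.

Definition S (M n : nat) : {poly int} := \poly_(d < n.+1) ('C(M + d, M))%:R.

Lemma S0 n : (1 - 'X) * S 0 n = 1 - 'X^(n.+1).
Proof.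
rewrite /S poly_def.
under eq_bigr do rewrite bin0 scale1r.
by rewrite -opprB mulNr -subrX1 opprB.
Qed.

Lemma Srec M n : (1 - 'X) * S M.+1 n = S M n - ('C(M.+1 + n, M.+1))%:R *: 'X^(n.+1).
Proof.
apply/polyP => j; rewrite mulrBl mul1r coefB coefXM coefB coefZ coefXn !coef_poly.
case: j => [|j] /=; first by rewrite !addn0 !binn mulr0 !subr0.
rewrite !ltnS eqSS.
case: (ltngtP j n) => h.
- rewrite mulr0 subr0 addnS binS natrD.
  by rewrite [X in X - _]addrC addrK addSnnS.
- by rewrite mulr0 !subr0.
- by subst j; rewrite mulr1.
Qed.

Lemma Smain M n : exists R : {poly int}, (1 - 'X) ^+ M.+1 * S M n = 1 - 'X^(n.+1) * R.
Proof.
elim: M => [|M [R IH]]; first by exists 1; rewrite expr1 S0 mulr1.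
exists (R + (1 - 'X) ^+ M.+1 * ('C(M.+1 + n, M.+1))%:R%:P).
rewrite exprSr -mulrA Srec -mul_polyC mulrBr IH; ring.
Qed.

Lemma coef_key a M n : (M.+1 <= a)%N ->
  ((1 - 'X) ^+ a * S M n)`_n = ((1 - 'X) ^+ (a - M.+1))`_n.
Proof.
move=> le; have [R HR] := Smain M n.
rewrite -(subnK le) exprD -mulrA HR addnK mulrBr mulr1 coefB.
by rewrite mulrA [_ * 'X^_]mulrC -mulrA coefXnM ltnSn subr0.
Qed.

Lemma hnum_poly (V : finType) (e : rel V) n :
  hnum e n = (((1 - 'X) ^+ alpha e) * \poly_(d < n.+1) (hilb e d)%:Z)`_n.
Proof.
rewrite coefM /hnum; apply: eq_bigr => i _; rewrite coef_poly ltnS leq_subr //.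
Qed.

Section MP2.
Variables (k : nat) (m : 'I_k -> nat).
Hypothesis mpos : forall i, (0 < m i)%N.
Local Notation e := (@multipartite_edge k m).
Local Notation al := (\max_(i < k) m i).

Lemma H_eq n : \poly_(d < n.+1) (hilb e d)%:Z = 1 + \sum_i (S (m i).-1 n - 1).
Proof.
apply/polyP => j; rewrite coef_poly coefD coef1 coef_sum.
under eq_bigr do rewrite coefB coef1 coef_poly.
case: j => [|j] /=.
  rewrite hilb0 big1 ?addr0 // => i _; by rewrite addn0 binn subrr.
rewrite add0r; case: ifP => hj.
  under eq_bigr do rewrite subr0.
  by rewrite hilb_formula // -natz natr_sum.
by rewrite big1 // => i _; rewrite subr0.
Qed.

Definition h0 : {poly int} :=
  (1 - k%:R)%:P * (1 - 'X) ^+ al + \sum_i (1 - 'X) ^+ (al - m i).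

Lemma hnum_mp n : hnum e n = h0`_n.
Proof.
rewrite hnum_poly alpha_mp H_eq mulrDr mulr1 mulr_sumr coefD coef_sum.
rewrite [X in _ + X](eq_bigr (fun i => ((1 - 'X) ^+ (al - m i))`_n - ((1 - 'X) ^+ al)`_n)); last first.
  by move=> i _; rewrite mulrBr mulr1 coefB coef_key ?prednK ?mpos ?leq_bigmax.
rewrite sumrB sumr_const card_ord /h0 coefD coefCM coef_sum.
rewrite mulrBl mul1r mulr_natl; ring.
Qed.

Lemma e1 : (1 - 'X : {poly int}) = - ('X - 1%:P).
Proof. by rewrite polyC1 opprB. Qed.

Lemma sum_small : (size (\sum_i (1 - 'X : {poly int}) ^+ (al - m i))%R <= al)%N.
Proof.
apply: leq_trans (size_sum _ _ _) _; apply/bigmax_leqP => i _.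
apply: leq_trans (size_poly_exp_leq _ _) _.
rewrite e1 size_polyN size_XsubC /= mul1n.
have := @leq_bigmax _ m i; have := mpos i => p q.
by rewrite ltn_subrL p /= (leq_trans p q).
Qed.

Lemma size_lead : k != 1%N ->
  size h0 = al.+1 /\ lead_coef h0 = (1 - k%:R) * (-1) ^+ al.
Proof.
move=> k1; have c0 : (1 - k%:R : int) != 0 by apply/eqP; lia.
have nz : ((1 - 'X) ^+ al : {poly int}) != 0.
  by apply: expf_neq0; rewrite e1 oppr_eq0 -size_poly_gt0 size_XsubC.
have sp : size ((1 - 'X) ^+ al : {poly int}) = al.+1.
  have := size_exp (1 - 'X : {poly int}) al; rewrite e1 size_polyN size_XsubC /= mul1n.
  rewrite -e1 => H; by rewrite -[in RHS]H prednK // size_poly_gt0.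
have sP : size ((1 - k%:R : int)%:P * (1 - 'X) ^+ al) = al.+1 by rewrite size_Cmul.
have lt : (size (\sum_i (1 - 'X : {poly int}) ^+ (al - m i))%R < size ((1 - k%:R : int)%:P * (1 - 'X) ^+ al)%R)%N.
  by rewrite sP ltnS sum_small.
split; first by rewrite /h0 size_polyDl // sP.
rewrite /h0 lead_coefDl // mul_polyC lead_coefZ lead_coef_exp e1 lead_coefN.
by rewrite lead_coefXsubC.
Qed.

Lemma al_pos : (1 <= k)%N -> (1 <= al)%N.
Proof.
move=> k1; exact: leq_trans (mpos (Ordinal k1)) (@leq_bigmax _ m _).
Qed.

Lemma main : (1 <= k)%N ->
  pseudo_gorenstein_star e <-> (k = 2%N /\ odd al).
Proof.
move=> k1; split.
- move=> [h [hn [hnz [lc sz]]]].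
  have hh : h = h0 by apply/polyP => n; rewrite -hn hnum_mp.
  subst h.
  have alp := al_pos k1.
  case: (eqVneq k 1%N) => [ek|k1'].
    exfalso.
    have : (size h0 <= al)%N.
      rewrite /h0 (_ : 1 - k%:R = 0); last by rewrite ek subrr.
      by rewrite mul0r add0r sum_small.
    move: sz alp; rewrite alpha_mp; set a := \max_(i < k) m i; lia.
  have [_ L] := size_lead k1'.
  move: lc; rewrite L -signr_odd.
  have k2 : (2 <= k)%N by lia.
  case: (odd al) => /=; rewrite ?expr1 ?expr0 => H; last by exfalso; lia.
  by split => //; lia.
- move=> [k2 oa].
  have k1' : k != 1%N by rewrite k2.
  have [s L] := size_lead k1'.
  exists h0; split; first exact: hnum_mp.
  split; first by rewrite -size_poly_gt0 s.
  split; first by rewrite L -signr_odd oa k2 expr1; lia.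
  by rewrite s alpha_mp /= subrr.
Qed.

End MP2.

Local Close Scope ring_scope.

Theorem corollary3p2 (k : nat) (m : 'I_k -> nat) :
  (1 <= k)%N -> (forall i, (1 <= m i)%N) ->
  pseudo_gorenstein_star (@multipartite_edge k m) <->
  (k = 2%N /\ odd (\max_(i < k) m i)).
Proof. by move=> k1 mpos; apply: main. Qed.
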